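(* Let $N\geq 3$ be prime, $q\in\mathbb{C}$ with $q^N=1$, $q\neq 1$, and let $X\subset\mathbb{R}^d$ be a convex subspace. Let $\tau:\Delta^m\to X$ and $\sigma:\Delta^n\to X$ be singular simplices ($m,n\geq 0$). Then for every integer $k\geq 0$, $$\partial^k(\tau*\sigma)=\sum_{i=0}^k q^{\,i(m+1-k+i)}\binom{k}{i}_q\,\mathcal{N}^{k-i}(\tau)*\mathcal{N}^{i}(\sigma).$$
   Context: $q$-numbers: $[k]_q=1+q+\cdots+q^{k-1}$, $[k]_q!=[1]_q\cdots[k]_q$ (with $[0]_q!=1$); $\binom{k}{i}_q$ denotes the Gaussian $q$-binomial coefficient evaluated at $q$, which equals $[k]_q!/([i]_q![k-i]_q!)$ for $0\le i\le k\le N-1$ and satisfies $\binom{n}{k}_q+q^{k+1}\binom{n}{k+1}_q=\binom{n+1}{k+1}_q$. Singular $q$-chains: $C^q_n(X)$ is the free $\mathbb{Z}[q]$-module on continuous maps $\Delta^n\to X$, $\Delta^n$ the convex hull of the standard basis $e_0,\dots,e_n$ of $\mathbb{R}^{n+1}$; $\partial_j\sigma=\sigma\circ\lambda_j$ with $\lambda_j:\Delta^{n-1}\to\Delta^n$ the affine map sending $e_0,\dots,e_{n-1}$ in order to $e_0,\dots,\widehat{e_j},\dots,e_n$; border map $\partial=\sum_{j=0}^n q^j\partial_j$ on $C^q_n(X)$ ($n\ge1$), $\partial=0$ on $C^q_0(X)$. Convex product: for $\tau:\Delta^m\to X$, $\sigma:\Delta^n\to X$ and $(\alpha;\beta)=(\alpha_0,\dots,\alpha_m;\beta_0,\dots,\beta_n)\in\Delta^{m+n+1}$,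 $\tau*\sigma(\alpha;\beta)$ is $\tau(\alpha)$ if $|\beta|=0$, $\sigma(\beta)$ if $|\alpha|=0$, and $|\alpha|\tau(\alpha/|\alpha|)+|\beta|\sigma(\beta/|\beta|)$ otherwise ($|\alpha|=\sum\alpha_i$, $|\beta|=\sum\beta_j$), extended bilinearly to chains. Newton's terms of a singular $m$-simplex $\tau$: $\mathcal{N}^i(\tau)=\partial^i(\tau)$ for $i\le m$, $\mathcal{N}^{m+1}(\tau)=[m+1]_q!\in\mathbb{Z}[q]$, and $\mathcal{N}^i(\tau)=0$ for $i\geq m+2$. Convention for convex products involving scalars: for $c\in\mathbb{Z}[q]$ and a chain $\xi$ of dimension $\ge0$, $c*\xi=\xi*c=c\,\xi$; for $c,c'\in\mathbb{Z}[q]$, $c*c'=0$. *)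

(* Defs.v *)
From HB Require Import structures.
From mathcomp Require Import all_boot all_order all_algebra.
From mathcomp Require Import algC.
From mathcomp Require Import boolp reals.
Set Implicit Arguments. Unset Strict Implicit. Unset Printing Implicit Defensive.
Import Order.TTheory GRing.Theory Num.Theory.
Local Open Scope ring_scope.

Section QChains.
Variables (R : realType) (d : nat).

(* Points of R^{n+1} are encoded as  nat -> R  (coordinates beyond n are 0). *)
Definition pt := nat -> R.

Definition inDelta (n : nat) (x : pt) : Prop :=
  [/\ forall i, (i <= n)%N -> 0 <= x i,
      forall i, (n < i)%N -> x i = 0
    & \sum_(i < n.+1) x i = 1].

(* A (candidate) singular n-simplex: a map Delta^n -> R^d; only its values on
   Delta^n matter (see simplex_eq). *)
Record simplex := Simplex { sdim : nat; smap : pt -> 'rV[R]_d }.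

Definition simplex_eq (s t : simplex) : Prop :=
  sdim s = sdim t /\ forall x, inDelta (sdim s) x -> smap s x = smap t x.

Definition cont_on_Delta (s : simplex) : Prop :=
  forall x, inDelta (sdim s) x -> forall e : R, 0 < e ->
  exists2 del : R, 0 < del & forall y, inDelta (sdim s) y ->
    (forall i, (i <= sdim s)%N -> `|y i - x i| < del) ->
    forall j, `|smap s y 0 j - smap s x 0 j| < e.

Definition singular_in (X : 'rV[R]_d -> Prop) (s : simplex) : Prop :=
  cont_on_Delta s /\ forall x, inDelta (sdim s) x -> X (smap s x).

Definition convex_set (X : 'rV[R]_d -> Prop) : Prop :=
  forall x y, X x -> X y -> forall t : R, 0 <= t <= 1 -> X (t *: x + (1 - t) *: y).

(* q-chains: formal (finite) linear combinations of simplices with coefficients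
   in algC (containing Z[q]); equality is equality of all coefficients. *)
Definition chain := seq (algC * simplex).

Definition coef (c : chain) (s : simplex) : algC :=
  \sum_(p <- c) (if `[< simplex_eq p.2 s >] then p.1 else 0).

Definition chain_eq (c c' : chain) : Prop := forall s, coef c s = coef c' s.

Definition scale_chain (a : algC) (c : chain) : chain :=
  [seq (a * p.1, p.2) | p <- c].

(* lambda_j : Delta^{n-1} -> Delta^n, e_i |-> e_i (i<j), e_i |-> e_{i+1} (i>=j). *)
Definition face (j : nat) (x : pt) : pt :=
  fun k => if (k < j)%N then x k else if k == j then 0 else x k.-1.

Definition bd_simplex (q : algC) (s : simplex) : chain :=
  match sdim s with
  | 0 => [::]
  | n.+1 => [seq (q ^+ j, Simplex n (smap s \o face j)) | j <- iota 0 n.+2]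
  end.

Definition bd (q : algC) (c : chain) : chain :=
  flatten [seq scale_chain p.1 (bd_simplex q p.2) | p <- c].

Definition bdn (q : algC) (k : nat) (c : chain) : chain := iter k (bd q) c.

(* Convex product of simplices tau (dim m) and sigma (dim n):
   a point of Delta^{m+n+1} is (alpha_0..alpha_m ; beta_0..beta_n). *)
Definition alpha (m : nat) (x : pt) : pt := fun i => if (i <= m)%N then x i else 0.
Definition beta (m n : nat) (x : pt) : pt :=
  fun j => if (j <= n)%N then x (m.+1 + j)%N else 0.

Definition sjoin (t s : simplex) : simplex :=
  let m := sdim t in let n := sdim s in
  Simplex (m + n + 1)
   (fun x =>
      let a := alpha m x in let b := beta m n x in
      let na := \sum_(i < m.+1) a i in let nb := \sum_(j < n.+1) b j in
      if nb == 0 then smap t a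
      else if na == 0 then smap s b
      else na *: smap t (fun i => a i / na) + nb *: smap s (fun j => b j / nb)).

Definition cprod (c c' : chain) : chain :=
  [seq (p.1 * p'.1, sjoin p.2 p'.2) | p <- c, p' <- c'].

Definition qint (q : algC) (k : nat) : algC := \sum_(l < k) q ^+ l.
Definition qfact (q : algC) (k : nat) : algC := \prod_(j < k) qint q j.+1.

Fixpoint qbinom (q : algC) (n k : nat) {struct n} : algC :=
  match n, k with
  | _, 0 => 1
  | 0, _.+1 => 0
  | n'.+1, k'.+1 => qbinom q n' k' + q ^+ k * qbinom q n' k
  end.

Inductive nterm := NC of chain | NS of algC.

Definition newton (q : algC) (t : simplex) (i : nat) : nterm :=
  if (i <= sdim t)%N then NC (bdn q i [:: (1, t)])
  else if i == (sdim t).+1 then NS (qfact q i)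
  else NC [::].

Definition nprod (a b : nterm) : chain :=
  match a, b with
  | NC c, NC c' => cprod c c'
  | NS x, NC c' => scale_chain x c'
  | NC c, NS y => scale_chain y c
  | NS _, NS _ => [::]
  end.

End QChains.

(* Main.v *)
Require Import Defs.
From HB Require Import structures.
From mathcomp Require Import all_boot all_order all_algebra.
From mathcomp Require Import algC zify ring.
From mathcomp Require Import boolp reals.
Set Implicit Arguments. Unset Strict Implicit. Unset Printing Implicit Defensive.
Import Order.TTheory GRing.Theory Num.Theory.
Local Open Scope ring_scope.

Section Geo.
Variables (R : realType).

Lemma faceSS j (y : pt R) i : face j.+1 y i.+1 = face j (fun k => y k.+1) i.
Proof.
rewrite /face ltnS eqSS; case: ltnP => // H; case: eqP => // Hne.
by congr y; lia.
Qed.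

Lemma sum_face j : forall n (y : pt R), (j <= n)%N ->
  \sum_(i < n.+1) face j y i = \sum_(i < n) y i.
Proof.
elim: j => [|j IH] n y Hj.
  rewrite big_ord_recl /= {1}/face /= add0r; apply: eq_bigr => i _.
  by rewrite /face /=.
case: n Hj => [//|n] Hj.
rewrite big_ord_recl [RHS]big_ord_recl; congr (_ + _).
rewrite -(IH n (fun k => y k.+1)) //; apply: eq_bigr => i _.
by rewrite lift0 faceSS.
Qed.

Lemma face_inDelta n j (x : pt R) : (j <= n.+1)%N -> inDelta n x -> inDelta n.+1 (face j x).
Proof.
move=> Hj [H0 H1 H2]; split.
- move=> i Hi; rewrite /face; case: ltnP => Hij; first by apply: H0; lia.
  case: eqP => // Hne; apply: H0; lia.
- move=> i Hi; rewrite /face; case: ltnP => Hij; first by lia.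
  case: eqP => // Hne; apply: H1; lia.
- by rewrite sum_face.
Qed.


End Geo.

Section Calc.
Variables (R : realType) (d : nat).
Local Notation simplex := (simplex R d).
Local Notation chain := (chain R d).

Definition wsum (g : simplex -> algC) (c : chain) : algC :=
  \sum_(p <- c) p.1 * g p.2.
Definition inv (g : simplex -> algC) := forall t t', simplex_eq t t' -> g t = g t'.

Lemma wsum_nil g : wsum g [::] = 0.
Proof. by rewrite /wsum big_nil. Qed.
Lemma wsum_cons g p c : wsum g (p :: c) = p.1 * g p.2 + wsum g c.
Proof. by rewrite /wsum big_cons. Qed.
Lemma wsum_cat g c1 c2 : wsum g (c1 ++ c2) = wsum g c1 + wsum g c2.
Proof. by rewrite /wsum big_cat. Qed.
Lemma wsum_scale g a c : wsum g (scale_chain a c) = a * wsum g c.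
Proof.
rewrite /wsum /scale_chain big_map mulr_sumr; apply: eq_bigr => p _ /=.
by rewrite mulrA.
Qed.
Lemma wsum_flatten g (L : seq chain) : wsum g (flatten L) = \sum_(c <- L) wsum g c.
Proof. by rewrite /wsum big_flatten. Qed.
Lemma wsum_bd q g c : wsum g (bd q c) = wsum (fun t => wsum g (bd_simplex q t)) c.
Proof.
rewrite /bd wsum_flatten big_map; apply: eq_bigr => p _; by rewrite wsum_scale.
Qed.
Lemma wsum_cprod g c c' :
  wsum g (cprod c c') = wsum (fun t => wsum (fun u => g (sjoin t u)) c') c.
Proof.
rewrite /cprod /wsum big_allpairs_dep; apply: eq_bigr => p _ /=.
rewrite mulr_sumr; apply: eq_bigr => p' _ /=; by rewrite mulrA.
Qed.
Lemma wsum_swap (h : simplex -> simplex -> algC) c1 c2 :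
  wsum (fun t => wsum (fun u => h t u) c2) c1 =
  wsum (fun u => wsum (fun t => h t u) c1) c2.
Proof.
rewrite /wsum.
under eq_bigr => p _ do rewrite mulr_sumr.
under [RHS]eq_bigr => p _ do rewrite mulr_sumr.
rewrite exchange_big; apply: eq_bigr => p _; apply: eq_bigr => p' _.
by rewrite mulrCA.
Qed.
Lemma wsumD g h c : wsum (fun t => g t + h t) c = wsum g c + wsum h c.
Proof. by rewrite /wsum -big_split; apply: eq_bigr => p _; rewrite mulrDr. Qed.
Lemma wsumZ a g c : wsum (fun t => a * g t) c = a * wsum g c.
Proof. by rewrite /wsum mulr_sumr; apply: eq_bigr => p _; rewrite mulrCA. Qed.
Lemma wsum_const a c : wsum (fun _ => a) c = a * \sum_(p <- c) p.1.
Proof. by rewrite /wsum mulr_sumr; apply: eq_bigr => p _; rewrite mulrC. Qed.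
Lemma eq_wsum (P : simplex -> bool) g h c :
  all (fun p => P p.2) c -> (forall t, P t -> g t = h t) -> wsum g c = wsum h c.
Proof.
move=> Hc Hgh; elim: c Hc => [|p c IH] /=; first by rewrite !wsum_nil.
by case/andP => Hp Hc; rewrite !wsum_cons IH // Hgh.
Qed.
Lemma wsum_unit g t : wsum g [:: (1, t)] = g t.
Proof. by rewrite wsum_cons wsum_nil addr0 mul1r. Qed.

Lemma seq_refl (t : simplex) : simplex_eq t t.
Proof. by split. Qed.
Lemma seq_sym (t t' : simplex) : simplex_eq t t' -> simplex_eq t' t.
Proof. by case=> E H; split=> // x; rewrite -E => Hx; rewrite H. Qed.
Lemma seq_trans (t1 t2 t3 : simplex) : simplex_eq t1 t2 -> simplex_eq t2 t3 -> simplex_eq t1 t3.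
Proof.
case=> E1 H1 [E2 H2]; split; first by rewrite E1.
by move=> x Hx; rewrite H1 // H2 // -E1.
Qed.

Definition delta (s : simplex) (t : simplex) : algC :=
  if `[< simplex_eq t s >] then 1 else 0.
Lemma inv_delta s : inv (delta s).
Proof.
move=> t t' E; rewrite /delta.
case: (asboolP (simplex_eq t s)) => H1; case: (asboolP (simplex_eq t' s)) => H2 //.
- by case: H2; apply: seq_trans (seq_sym E) H1.
- by case: H1; apply: seq_trans E H2.
Qed.
Lemma coef_wsum c s : coef c s = wsum (delta s) c.
Proof.
rewrite /coef /wsum; apply: eq_bigr => p _; rewrite /delta.
by case: asboolP; rewrite ?mulr1 ?mulr0.
Qed.


Lemma wsum_map_iota g (l : seq nat) (F : nat -> algC) (S : nat -> simplex) :
  wsum g [seq (F j, S j) | j <- l] = \sum_(j <- l) F j * g (S j).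
Proof. by rewrite /wsum big_map. Qed.

Lemma bd_simplexS q (t : simplex) n : sdim t = n.+1 ->
  bd_simplex q t = [seq (q ^+ j, Simplex n (smap t \o face j)) | j <- iota 0 n.+2].
Proof. by rewrite /bd_simplex => ->. Qed.

Lemma inv_bd q g : inv g -> inv (fun t => wsum g (bd_simplex q t)).
Proof.
move=> Hg t t' [E H] /=; rewrite /bd_simplex -E.
case Et: (sdim t) => [//|n].
rewrite !wsum_map_iota; apply: eq_big_seq => j; rewrite mem_iota add0n => Hj.
congr (_ * _); apply: Hg; split => //= x Hx.
by apply: H; rewrite Et; apply: face_inDelta => //; lia.
Qed.

Ltac brute := repeat match goal with
  | |- context [if (?a < ?b)%N then _ else _] => case: (ltnP a b) => ?
  | |- context [if (?a <= ?b)%N then _ else _] => case: (leqP a b) => ?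
  | |- context [if ?a == ?b :> nat then _ else _] => case: (@eqP nat a b) => ?
  end; first [done | (exfalso; lia) | (congr (_ _); lia) | idtac].

Lemma face_div j (y : pt R) (c : R) :
  (fun i => face j y i / c) = face j (fun i => y i / c).
Proof. by apply: funext => i; rewrite /face; brute; rewrite mul0r. Qed.

Lemma alpha_face a' j (x : pt R) : (j <= a'.+1)%N ->
  alpha a'.+1 (face j x) = face j (alpha a' x).
Proof. by move=> Hj; apply: funext => i; rewrite /alpha /face; brute. Qed.

Lemma beta_face a' b j (x : pt R) : (j <= a'.+1)%N ->
  beta a'.+1 b (face j x) = beta a' b x.
Proof. by move=> Hj; apply: funext => i; rewrite /beta /face; brute. Qed.

Lemma alpha_face2 a j (x : pt R) : alpha a (face (a.+1 + j) x) = alpha a x.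
Proof. by apply: funext => i; rewrite /alpha /face; brute. Qed.

Lemma beta_face2 a b' j (x : pt R) : (j <= b'.+1)%N ->
  beta a b'.+1 (face (a.+1 + j) x) = face j (beta a b' x).
Proof. by move=> Hj; apply: funext => i; rewrite /beta /face; brute. Qed.


Lemma L1 (t u : simplex) a' j : sdim t = a'.+1 -> (j <= a'.+1)%N ->
  simplex_eq (Simplex (sdim t + sdim u) (smap (sjoin t u) \o face j))
             (sjoin (Simplex a' (smap t \o face j)) u).
Proof.
move=> Ht Hj; split => /=; first by rewrite Ht; lia.
move=> x _; rewrite /sjoin /= Ht alpha_face // beta_face // sum_face //.
by rewrite face_div.
Qed.

Lemma L3 (t u : simplex) b' j : sdim u = b'.+1 -> (j <= b'.+1)%N ->
  simplex_eq (Simplex (sdim t + sdim u) (smap (sjoin t u) \o face ((sdim t).+1 + j)))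
             (sjoin t (Simplex b' (smap u \o face j))).
Proof.
move=> Hu Hj; split => /=; first by rewrite Hu; lia.
move=> x _; rewrite /sjoin /= Hu alpha_face2 beta_face2 // sum_face //.
by rewrite face_div.
Qed.

Lemma L0 (t u : simplex) : sdim t = 0%N ->
  simplex_eq (Simplex (sdim t + sdim u) (smap (sjoin t u) \o face 0)) u.
Proof.
move=> Ht; split => /=; first by rewrite Ht.
rewrite Ht /= => x [H0 H1 H2]; rewrite /sjoin /=.
have -> : alpha 0 (face 0 x) = fun _ => 0.
  by apply: funext => i; rewrite /alpha /face; brute.
have -> : beta 0 (sdim u) (face 0 x) = x.
  apply: funext => i; rewrite /beta /face; brute.
  by rewrite H1.
rewrite H2 oner_eq0 big1 ?eqxx //.
Qed.

Lemma L2 (t u : simplex) : sdim u = 0%N ->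
  simplex_eq (Simplex (sdim t + sdim u) (smap (sjoin t u) \o face (sdim t).+1)) t.
Proof.
move=> Hu; split => /=; first by rewrite Hu addn0.
rewrite Hu addn0 => x [H0 H1 H2]; rewrite /sjoin /=.
have -> : alpha (sdim t) (face (sdim t).+1 x) = x.
  apply: funext => i; rewrite /alpha /face; brute.
  by rewrite H1.
have -> : beta (sdim t) 0 (face (sdim t).+1 x) = fun _ => 0.
  by apply: funext => i; rewrite /beta /face; brute.
by rewrite big1 ?eqxx.
Qed.


Lemma leib1 q g (t u : simplex) : inv g ->
  wsum g (bd_simplex q (sjoin t u)) =
  (if sdim t == 0%N then g u else wsum (fun v => g (sjoin v u)) (bd_simplex q t))
  + q ^+ (sdim t).+1 *
    (if sdim u == 0%N then g t else wsum (fun v => g (sjoin t v)) (bd_simplex q u)).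
Proof.
move=> Hg.
rewrite (@bd_simplexS q _ (sdim t + sdim u)); last by rewrite /= addn1.
rewrite wsum_map_iota.
rewrite (_ : (sdim t + sdim u).+2 = (sdim t).+1 + (sdim u).+1)%N; last by lia.
rewrite iotaD big_cat; congr (_ + _).
  have [Ht|[a' Ht]] : sdim t = 0%N \/ exists a', sdim t = a'.+1.
    by case: (sdim t) => [|a']; [left|right; exists a'].
    rewrite Ht eqxx big_seq1 expr0 mul1r; apply: Hg.
    by have := L0 u Ht; rewrite Ht.
  rewrite Ht.
  rewrite (bd_simplexS q Ht) wsum_map_iota; apply: eq_big_seq => j.
  rewrite mem_iota add0n => Hj; congr (_ * _); apply: Hg.
  by have := @L1 t u a' j Ht ltac:(lia); rewrite Ht.
have -> : iota (sdim t).+1 (sdim u).+1 = map (addn (sdim t).+1) (iota 0 (sdim u).+1).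
  by rewrite -iotaDl addn0.
rewrite big_map; under eq_bigr do rewrite exprD -mulrA.
rewrite -mulr_sumr; congr (_ * _).
have [Hu|[b' Hu]] : sdim u = 0%N \/ exists b', sdim u = b'.+1.
  by case: (sdim u) => [|b']; [left|right; exists b'].
  rewrite Hu eqxx big_seq1 expr0 mul1r addn0; apply: Hg.
  by have := L2 t Hu; rewrite Hu !addn0.
rewrite Hu.
rewrite (bd_simplexS q Hu) wsum_map_iota; apply: eq_big_seq => j.
rewrite mem_iota add0n => Hj; congr (_ * _); apply: Hg.
by have := @L3 t u b' j Hu ltac:(lia); rewrite Hu.
Qed.


Definition hom (a : nat) (c : chain) := all (fun p => sdim p.2 == a) c.
Definition eps (c : chain) := wsum (fun _ => 1) c.

Lemma wsum_constE k (c : chain) : wsum (fun _ => k) c = k * eps c.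
Proof. by rewrite /eps -wsumZ; apply: eq_bigr => p _; rewrite mulr1. Qed.

Lemma bd_cons q (p : algC * simplex) (c : chain) : bd q (p :: c) = scale_chain p.1 (bd_simplex q p.2) ++ bd q c.
Proof. by []. Qed.

Lemma hom_bd q a (c : chain) : hom a.+1 c -> hom a (bd q c).
Proof.
elim: c => [//|p c IH] /= /andP [Hp Hc]; rewrite bd_cons /hom all_cat; apply/andP; split; last exact: IH.
rewrite (bd_simplexS q (eqP Hp)) /scale_chain -map_comp all_map.
by apply/allP => j _ /=.
Qed.

Lemma bd_hom0 q (c : chain) : hom 0 c -> bd q c = [::].
Proof.
elim: c => [//|p c IH] /= /andP [Hp Hc]; rewrite bd_cons IH //.
by rewrite /bd_simplex (eqP Hp).
Qed.

Lemma hom_bdn q (tau : simplex) a : (a <= sdim tau)%N ->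
  hom (sdim tau - a) (bdn q a [:: (1, tau)]).
Proof.
elim: a => [|a IH] Ha; first by rewrite /hom /= subn0 eqxx.
rewrite /bdn iterS; apply: hom_bd.
by rewrite (_ : (sdim tau - a.+1).+1 = sdim tau - a)%N; [apply: IH; lia | lia].
Qed.

Lemma eps_bd q a (c : chain) : hom a.+1 c -> eps (bd q c) = qint q a.+2 * eps c.
Proof.
move=> Hc; rewrite /eps wsum_bd -wsumZ.
apply: (eq_wsum (P := fun t => sdim t == a.+1)) => // t /eqP Ht.
rewrite (bd_simplexS q Ht) wsum_map_iota /qint.
rewrite -(big_mkord xpredT) /index_iota subn0; rewrite mulr1; apply: eq_bigr => j _.
by rewrite !mulr1.
Qed.

Lemma eps_bdn q (tau : simplex) a : (a <= sdim tau)%N ->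
  eps (bdn q a [:: (1, tau)]) * qfact q ((sdim tau).+1 - a) = qfact q (sdim tau).+1.
Proof.
elim: a => [|a IH] Ha; first by rewrite /eps wsum_unit mul1r subn0.
rewrite /bdn iterS (@eps_bd q (sdim tau - a.+1)); last first.
  rewrite (_ : (sdim tau - a.+1).+1 = sdim tau - a)%N; [apply: hom_bdn; lia | lia].
rewrite -[RHS]IH; last by lia.
rewrite (_ : ((sdim tau).+1 - a) = (sdim tau - a.+1).+2)%N; last by lia.
rewrite (_ : ((sdim tau).+1 - a.+1) = (sdim tau - a.+1).+1)%N; last by lia.
rewrite /qfact [in RHS]big_ord_recr /= /bdn.
by ring.
Qed.

Lemma wsum2D (h1 h2 : simplex -> simplex -> algC) k (c c' : chain) :
  wsum (fun t => wsum (fun u => h1 t u + k * h2 t u) c') c =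
  wsum (fun t => wsum (h1 t) c') c + k * wsum (fun t => wsum (h2 t) c') c.
Proof.
rewrite -wsumZ -wsumD; apply: eq_bigr => p _; congr (_ * _).
by rewrite wsumD wsumZ.
Qed.

Lemma leibC q g (c c' : chain) a b : inv g -> hom a c -> hom b c' ->
  wsum g (bd q (cprod c c')) =
  (if a == 0%N then eps c * wsum g c' else wsum g (cprod (bd q c) c'))
  + q ^+ a.+1 * (if b == 0%N then eps c' * wsum g c else wsum g (cprod c (bd q c'))).
Proof.
move=> Hg Hc Hc'; rewrite wsum_bd wsum_cprod.
rewrite (eq_wsum (P := fun t => sdim t == a) (h := fun t =>
   wsum (fun u => (if a == 0%N then g u else wsum (fun v => g (sjoin v u)) (bd_simplex q t))
    + q ^+ a.+1 * (if b == 0%N then g t else wsum (fun v => g (sjoin t v)) (bd_simplex q u))) c')) //;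
  last first.
  move=> t /eqP Ht; apply: (eq_wsum (P := fun u => sdim u == b)) => // u /eqP Hu.
  by rewrite leib1 // Ht Hu.
rewrite wsum2D; congr (_ + _ * _).
  case: eqP => Ha.
    by rewrite wsum_constE mulrC.
  rewrite wsum_cprod wsum_bd; apply: eq_bigr => p _; congr (_ * _).
  by rewrite wsum_swap.
case: eqP => Hb.
  rewrite /eps -wsumZ; apply: eq_bigr => p _; congr (_ * _).
  by rewrite wsum_constE mulrC.
rewrite wsum_cprod; apply: eq_bigr => p _; congr (_ * _).
by rewrite wsum_bd.
Qed.


Lemma newton_le q (t : simplex) a : (a <= sdim t)%N -> newton q t a = NC (bdn q a [:: (1, t)]).
Proof. by rewrite /newton => ->. Qed.
Lemma newton_eq q (t : simplex) : newton q t (sdim t).+1 = NS R d (qfact q (sdim t).+1).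
Proof. by rewrite /newton ltnn eqxx. Qed.
Lemma newton_gt q (t : simplex) a : ((sdim t).+1 < a)%N -> newton q t a = NC [::].
Proof.
rewrite /newton => H; case: ifP => H1; first by lia.
by case: eqP => H2 //; lia.
Qed.
Lemma nprod_nilL (x : nterm R d) : nprod (NC [::]) x = [::].
Proof. by case: x. Qed.
Lemma cprod_nil (c : chain) : cprod c [::] = [::].
Proof. by elim: c. Qed.
Lemma nprod_nilR (x : nterm R d) : nprod x (NC [::]) = [::].
Proof. by case: x => //= c; rewrite cprod_nil. Qed.
Lemma wsum_bd_scale q g x (c : chain) : wsum g (bd q (scale_chain x c)) = x * wsum g (bd q c).
Proof. by rewrite !wsum_bd wsum_scale. Qed.

Lemma qfact1 q : qfact q 1 = 1.
Proof. by rewrite /qfact big_ord1 /qint big_ord1 expr0. Qed.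

Lemma eps_bdn_full q (t : simplex) : eps (bdn q (sdim t) [:: (1, t)]) = qfact q (sdim t).+1.
Proof. by have := @eps_bdn q t (sdim t) (leqnn _); rewrite subSnn qfact1 mulr1. Qed.

Lemma hom_bdn_full q (t : simplex) : hom 0 (bdn q (sdim t) [:: (1, t)]).
Proof. by have := @hom_bdn q t (sdim t) (leqnn _); rewrite subnn. Qed.

Lemma leibN q g (tau sigma : simplex) a b : inv g ->
  wsum g (bd q (nprod (newton q tau a) (newton q sigma b))) =
  wsum g (nprod (newton q tau a.+1) (newton q sigma b)) +
  q ^+ ((sdim tau).+1 - a) * wsum g (nprod (newton q tau a) (newton q sigma b.+1)).
Proof.
move=> Hg.
have Hnil : forall x y, (x = NC [::] \/ y = NC [::]) ->
    wsum g (nprod x y) = 0.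
  by move=> x y [] ->; rewrite ?nprod_nilL ?nprod_nilR wsum_nil.
have [Hb|Hb|Hb] := ltngtP b (sdim sigma).+1.
- have [Ha|Ha|Ha] := ltngtP a (sdim tau).+1.
  +
    rewrite (newton_le q (t:=tau) (a:=a)) ?(newton_le q (t:=sigma) (a:=b)) //; try lia.
    rewrite /nprod (@leibC q g _ _ (sdim tau - a) (sdim sigma - b)) //;
      try (apply: hom_bdn; lia).
    rewrite -subSn; last by lia.
    congr (_ + _ * _).
      case: eqP => H0.
        have Ea : a = sdim tau by lia.
        by rewrite Ea newton_eq eps_bdn_full /nprod wsum_scale.
      by rewrite newton_le /bdn ?iterS //; lia.
    case: eqP => H0.
      have Eb : b = sdim sigma by lia.
      by rewrite Eb newton_eq eps_bdn_full /nprod wsum_scale.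
    by rewrite newton_le /bdn ?iterS //; lia.
  + rewrite !(newton_gt q (t:=tau) (a:=a.+1)) ?(newton_gt q (t:=tau) (a:=a)) //; try lia.
    by rewrite !nprod_nilL /= wsum_nil mulr0 addr0.
  + rewrite Ha newton_eq (newton_gt q (t:=tau) (a:=(sdim tau).+2)) // nprod_nilL wsum_nil add0r.
    rewrite subnn expr0 mul1r newton_le; last by lia.
    have [Hb2|Hb2] : (b < sdim sigma \/ b = sdim sigma)%N by lia.
      by rewrite (newton_le q (t:=sigma) (a:=b.+1)) // /nprod wsum_bd_scale wsum_scale /bdn iterS.
    rewrite Hb2 newton_eq /nprod wsum_bd_scale bd_hom0 ?hom_bdn_full //.
    by rewrite !wsum_nil mulr0.
- rewrite !(newton_gt q (t:=sigma) (a:=b.+1)) ?(newton_gt q (t:=sigma) (a:=b)) //; try lia.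
  by rewrite !nprod_nilR /= wsum_nil mulr0 addr0.
- have [Ha|Ha|Ha] := ltngtP a (sdim tau).+1.
  + rewrite Hb newton_eq (newton_gt q (t:=sigma) (a:=(sdim sigma).+2)) // nprod_nilR wsum_nil mulr0 addr0.
    rewrite newton_le; last by lia.
    have [Ha2|Ha2] : (a < sdim tau \/ a = sdim tau)%N by lia.
      by rewrite (newton_le q (t:=tau) (a:=a.+1)) // /nprod wsum_bd_scale wsum_scale /bdn iterS.
    rewrite Ha2 newton_eq /nprod wsum_bd_scale bd_hom0 ?hom_bdn_full //.
    by rewrite !wsum_nil mulr0.
  + rewrite !(newton_gt q (t:=tau) (a:=a.+1)) ?(newton_gt q (t:=tau) (a:=a)) //; try lia.
    by rewrite !nprod_nilL /= wsum_nil mulr0 addr0.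
  + rewrite Ha Hb !newton_eq (newton_gt q (t:=sigma) (a:=(sdim sigma).+2)) //.
    rewrite (newton_gt q (t:=tau) (a:=(sdim tau).+2)) //.
    by rewrite nprod_nilL nprod_nilR /= wsum_nil mulr0 addr0.
Qed.


End Calc.

Lemma qbinom_gt q n k : (n < k)%N -> qbinom q n k = 0.
Proof.
elim: n k => [|n IH] [|k] //= H.
by rewrite !IH ?mulr0 ?addr0 //; lia.
Qed.

Lemma sum_iota (f : nat -> algC) n : \sum_(i <- iota 0 n) f i = \sum_(i < n) f i.
Proof. by rewrite -(big_mkord xpredT) /index_iota subn0. Qed.

Lemma sum_alg (W : nat -> nat -> algC) (c : nat -> nat -> algC) (e : nat -> algC) k :
  c k.+1 0%N = c k 0%N -> c k k.+1 = 0 ->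
  (forall i, (i <= k)%N -> c k.+1 i.+1 * W (k - i)%N i.+1 =
      (c k i.+1 + c k i * e (k - i)%N) * W (k - i)%N i.+1) ->
  \sum_(i < k.+1) c k i * (W (k - i).+1 i + e (k - i)%N * W (k - i)%N i.+1) =
  \sum_(i < k.+2) c k.+1 i * W (k.+1 - i)%N i.
Proof.
move=> H0 H1 H.
rewrite [RHS]big_ord_recl /= subn0 H0.
under eq_bigr do rewrite mulrDr.
rewrite big_split /= big_ord_recl /= subn0 -addrA; congr (_ + _).
have -> : \sum_(i < k) c k (bump 0 i) * W (k - bump 0 i).+1 (bump 0 i) =
          \sum_(i < k.+1) c k i.+1 * W (k - i)%N i.+1.
  rewrite big_ord_recr /= H1 mul0r addr0; apply: eq_bigr => i _.
  rewrite /bump /=; congr (_ * W _ _); have := ltn_ord i; lia.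
rewrite -big_split; apply: eq_bigr => i _ /=.
rewrite /bump /= subSS H; last by have := ltn_ord i; lia.
by rewrite mulrDl mulrA.
Qed.

Definition cc (q : algC) (m k i : nat) : algC :=
  q ^ (i%:Z * (m%:Z + 1 - k%:Z + i%:Z)) * qbinom q k i.

Lemma cc_rec q m k i : (i <= k)%N -> (k - i <= m.+1)%N ->
  cc q m k.+1 i.+1 = cc q m k i.+1 + cc q m k i * q ^+ (m.+1 - (k - i)).
Proof.
move=> H1 H2; set z := (m.+1 - (k - i))%N.
rewrite /cc.
have E1 : (m%:Z + 1 - Posz k.+1 + Posz i.+1) = z%:Z by rewrite /z; lia.
have E2 : (m%:Z + 1 - Posz k + Posz i.+1) = (z + 1)%N%:Z by rewrite /z; lia.
have E3 : (m%:Z + 1 - Posz k + Posz i) = z%:Z by rewrite /z; lia.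
rewrite E1 E2 E3 -!PoszM -!exprnP /=.
rewrite mulnDr muln1 mulSn !exprD; ring.
Qed.

Lemma cc0 q m k : cc q m k 0%N = 1.
Proof.
rewrite /cc (_ : Posz 0 * _ = 0); last by apply: mul0r.
by rewrite expr0z mul1r; case: k.
Qed.

Lemma main_wsum (R : realType) (d : nat) q (tau sigma : simplex R d) g k : inv g ->
  wsum g (bdn q k [:: (1, sjoin tau sigma)]) =
  \sum_(i <- iota 0 k.+1) cc q (sdim tau) k i *
      wsum g (nprod (newton q tau (k - i)) (newton q sigma i)).
Proof.
elim: k g => [|k IH] g Hg.
  rewrite /bdn /= wsum_unit big_seq1 cc0 mul1r.
  rewrite !newton_le // /nprod /bdn /= wsum_cprod !wsum_unit /=.
  by [].
rewrite (_ : bdn q k.+1 _ = bd q (bdn q k [:: (1, sjoin tau sigma)])) //.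
rewrite wsum_bd (IH _ (inv_bd q Hg)).
under eq_bigr do rewrite -wsum_bd leibN //.
rewrite !sum_iota.
apply: (sum_alg (W := fun a b => wsum g (nprod (newton q tau a) (newton q sigma b)))
   (c := cc q (sdim tau)) (e := fun a => q ^+ ((sdim tau).+1 - a))).
- by rewrite !cc0.
- by rewrite /cc qbinom_gt ?mulr0.
move=> i Hi; case: (leqP (k - i) (sdim tau).+1) => H.
  by rewrite cc_rec.
by rewrite newton_gt // nprod_nilL wsum_nil !mulr0.
Qed.

Unset Implicit Arguments.

Theorem proposition4p4 (R : realType) (d N : nat) (q : algC)
    (X : 'rV[R]_d -> Prop) (tau sigma : simplex R d) :
  prime N -> (3 <= N)%N -> q ^+ N = 1 -> q != 1 ->
  convex_set X -> singular_in X tau -> singular_in X sigma ->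
  forall k : nat,
    chain_eq (bdn q k [:: (1, sjoin tau sigma)])
      (flatten [seq scale_chain
                  (q ^ (i%:Z * ((sdim tau)%:Z + 1 - k%:Z + i%:Z))
                     * qbinom q k i)
                  (nprod (newton q tau (k - i)) (newton q sigma i))
               | i <- iota 0 k.+1]).
Proof.
move=> _ _ _ _ _ _ _ k s.
rewrite !coef_wsum main_wsum; last exact: inv_delta.
rewrite wsum_flatten big_map.
by apply: eq_bigr => i _; rewrite wsum_scale.
Qed.
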